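(* Let $\Gamma$ be a finite connected $(G,3)$-geodesic-transitive graph of girth $4$ or $5$, with $G\le\mathrm{Aut}(\Gamma)$. Suppose that $G$ has a normal subgroup $N$ whose orbits on $V(\Gamma)$ all have size $m\ge2$, such that $\Gamma_N\cong K_{r,r}$ with $r\ge3$ and $\Gamma$ is a cover of $\Gamma_N$. Then $\Gamma$ is bipartite with girth $4$ and diameter at least $4$, and one of the following holds: (1) $m=2$ and $\Gamma$ is a Hadamard graph of valency $r$; (2) $\Gamma$ is a $G$-distance-transitive antipodal graph $mK_{r,r}$ which is the incidence graph of a resolvable divisible design $RGD(r,c_2,m)$, where $r=mc_2$, such that any two blocks from different parallel classes contain exactly $c_2$ common points; $\Gamma$ has intersection array $(r,r-1,r-c_2,1;1,c_2,r-1,r)$, and $c_2\ge2$, $m\ge3$; (3) $\Gamma$ is not $(G,4)$-distance-transitive.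
   Context: An $s$-geodesic is a path $(v_0,\dots,v_s)$ with $d(v_0,v_s)=s$; $\Gamma$ is $(G,s)$-geodesic-transitive if it has an $s$-geodesic and $G$ is transitive on $i$-geodesics for each $i\le s$; $(G,s)$-distance-transitive if for each $i\le s$, $G$ is transitive on ordered pairs at distance $i$, and $G$-distance-transitive if this holds for $s=\mathrm{diam}(\Gamma)$. $\Gamma_N$ has the $N$-orbits as vertices, distinct orbits adjacent iff some edge joins them; $\Gamma$ is a cover of $\Gamma_N$ if each vertex of an orbit $B$ has exactly one neighbour in each orbit adjacent to $B$. $c_2$ is the number of common neighbours of two vertices at distance $2$. A Hadamard graph of valency $2\mu$ is a distance-regular graph with intersection array $(2\mu,2\mu-1,\mu,1;1,\mu,2\mu-1,2\mu)$. A graph of diameter $d$ is antipodal if ''distance $0$ or $d$'' is an equivalence relation; $mK_{r,r}$ denotes an antipodal $m$-fold cover of $K_{r,r}$. A divisible design $GD(k,\lambda,n,kn)$ is $(X,\mathcal P,\mathcal B)$: $|X|=kn$, $\mathcal P$ a partition of $X$ into classes of size $n$, $\mathcal B$ a collection of $k$-subsets (blocks) each meeting every class in one point, any two points in different classes lying in exactly $\lambda$ blocks; it is resolvable, $RGD(k,\lambda,n)$, if $\mathcal B$ is partitioned into parallel classes (each a partition of $X$). The incidence graph has vertex set $X\cup\mathcal B$ with $x\sim B$ iff $x\in B$. The intersection array $(b_0,\dots,b_{d-1};c_1,\dots,c_d)$ of a distance-regular graph lists, for $v$ at distance $i$ from $u$, the numbers $b_i$ of neighbours of $v$ at distance $i+1$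 and $c_i$ at distance $i-1$ from $u$. *)

(* Defs.v *)
From mathcomp Require Import all_boot all_order all_fingroup.
Set Implicit Arguments. Unset Strict Implicit. Unset Printing Implicit Defensive.

Section GraphDefs.
Variable V : finType.
Variable adj : rel V.

Fixpoint reach (k : nat) (u v : V) : bool :=
  if k is k'.+1 then reach k' u v || [exists w, reach k' u w && adj w v]
  else u == v.

(* graph distance (correct for connected graphs: distances are < #|V|) *)
Definition dist (u v : V) : nat := find (fun k => reach k u v) (iota 0 #|V|).

Definition diam : nat := \max_(u : V) \max_(v : V) dist u v.

Definition is_geodesic (s : nat) (p : seq V) : bool :=
  if p is x :: q then [&& size q == s, path adj x q & dist x (last x q) == s]
  else false.

Definition geodesic_transitive (G : {set {perm V}}) (s : nat) : Prop :=
  (exists p, is_geodesic s p) /\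
  forall i, i <= s -> forall p q, is_geodesic i p -> is_geodesic i q ->
    exists2 g, g \in G & map g p = q.

Definition dist_transitive (G : {set {perm V}}) (s : nat) : Prop :=
  forall i, i <= s -> forall u v x y, dist u v = i -> dist x y = i ->
    exists2 g, g \in G & g u = x /\ g v = y.

Definition is_cycle (c : seq V) : bool := [&& 3 <= size c, uniq c & path.cycle adj c].

Definition girth_eq (g : nat) : Prop :=
  (exists c, is_cycle c /\ size c = g) /\ (forall c, is_cycle c -> g <= size c).

Definition bipartite : Prop := exists f : V -> bool, forall x y, adj x y -> f x != f y.

Definition qadj (B C : {set V}) : bool :=
  (B != C) && [exists x in B, exists y in C, adj x y].

Definition Kadj (r : nat) (a b : 'I_r + 'I_r) : bool :=
  match a, b with inl _, inr _ | inr _, inl _ => true | _, _ => false end.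

Definition quotient_is_Krr (P : {set {set V}}) (r : nat) : Prop :=
  exists phi : {set V} -> 'I_r + 'I_r,
    [/\ {in P &, injective phi},
        (forall z, exists2 B, B \in P & phi B = z) &
        {in P &, forall B C, qadj B C = Kadj (phi B) (phi C)}].

Definition is_cover (P : {set {set V}}) : Prop :=
  forall x B C, B \in P -> C \in P -> x \in B -> qadj B C ->
    #|[set y in C | adj x y]| = 1.

(* intersection array (b_0..b_{d-1}; c_1..c_d) of a distance-regular graph *)
Definition nbrs_at (u v : V) (j : nat) : nat := #|[set w | adj v w & dist u w == j]|.

Definition has_intersection_array (bs cs : seq nat) : Prop :=
  [/\ size bs = diam, size cs = diam &
      forall u v, (dist u v < diam -> nbrs_at u v (dist u v).+1 = nth 0 bs (dist u v)) /\
                  (0 < dist u v -> nbrs_at u v (dist u v).-1 = nth 0 cs (dist u v).-1)].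

Definition hadamard_valency (k : nat) : Prop :=
  exists mu, k = 2 * mu /\
    has_intersection_array [:: 2 * mu; 2 * mu - 1; mu; 1] [:: 1; mu; 2 * mu - 1; 2 * mu].

Definition antip (u v : V) : bool := (dist u v == 0) || (dist u v == diam).

Definition antipodal : Prop :=
  [/\ forall x, antip x x, forall x y, antip x y -> antip y x &
      forall x y z, antip x y -> antip y z -> antip x z].

Definition antipodal_classes : {set {set V}} := [set [set y | antip x y] | x : V].

Definition antipodal_cover_Krr (m r : nat) : Prop :=
  [/\ antipodal, (forall B, B \in antipodal_classes -> #|B| = m),
      quotient_is_Krr antipodal_classes r & is_cover antipodal_classes].

(* Gamma is the incidence graph of a resolvable divisible design RGD(k,lam,n):
   points = vertices with side true, blocks = vertices with side false
   (a block is identified with the set of points adjacent to it),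
   Pcl = point classes, Par = parallel classes of blocks. *)
Definition blk (side : V -> bool) (b : V) : {set V} := [set x | side x & adj b x].

Definition RGD_incidence (k lam n : nat) (side : V -> bool)
    (Pcl Par : {set {set V}}) : Prop :=
  let X := [set x | side x] in
  let Bl := [set x | ~~ side x] in
  [/\ (forall x y, adj x y -> side x != side y),
      #|X| = k * n /\ partition Pcl X /\ (forall C, C \in Pcl -> #|C| = n),
      (forall b, b \in Bl -> #|blk side b| = k /\
                   forall C, C \in Pcl -> #|blk side b :&: C| = 1),
      (forall x y, x \in X -> y \in X -> pblock Pcl x != pblock Pcl y ->
                   #|[set b in Bl | adj b x && adj b y]| = lam) &
      partition Par Bl /\
      (forall Q, Q \in Par -> forall x, x \in X -> #|[set b in Q | adj b x]| = 1)].

End GraphDefs.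

(* Main.v *)
Require Import Defs.
From mathcomp Require Import all_boot all_order all_fingroup zify.
From Stdlib Require Import Classical_Prop.
Set Implicit Arguments. Unset Strict Implicit. Unset Printing Implicit Defensive.

Section Dist.
Variable V : finType.
Variable adj : rel V.
Hypothesis sym : symmetric adj.
Hypothesis irr : irreflexive adj.
Hypothesis conn : forall u v, connect adj u v.

Lemma reach_le k l u v : k <= l -> reach adj k u v -> reach adj l u v.
Proof.
elim: l => [|l IH]; first by rewrite leqn0 => /eqP ->.
rewrite leq_eqVlt => /orP [/eqP -> //|] Hk H /=.
by rewrite IH.
Qed.

Lemma reach_S k u v : reach adj k.+1 u v =
  reach adj k u v || [exists w, reach adj k u w && adj w v].
Proof. by []. Qed.

Lemma reach_cons k u w v : adj u w -> reach adj k w v -> reach adj k.+1 u v.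
Proof.
move=> Huw; elim: k v => [|k IH] v.
  rewrite /= => /eqP <-; apply/orP; right; apply/existsP; exists u; by rewrite eqxx.
rewrite reach_S => /orP [H|/existsP [x /andP [Hx Hxv]]].
  by rewrite reach_S (IH _ H).
rewrite reach_S.
apply/orP; right; apply/existsP; exists x; by rewrite IH.
Qed.

Lemma reach_path u p : path adj u p -> reach adj (size p) u (last u p).
Proof.
elim: p u => [|x p IH] u /=; first by [].
case/andP=> Hux Hp; exact: reach_cons Hux (IH _ Hp).
Qed.

Lemma reach_full u v : reach adj #|V|.-1 u v.
Proof.
have /connectP [p Hp ->] := conn u v.
case: (shortenP Hp) => p' Hp' Hu _.
apply: reach_le (reach_path Hp').
have := max_card (mem (u :: p')).
by rewrite (card_uniqP Hu) /=; case: #|V|.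
Qed.

Let s := iota 0 #|V|.

Lemma has_reach u v : has (fun k => reach adj k u v) s.
Proof.
apply/hasP; exists #|V|.-1; last exact: reach_full.
rewrite mem_iota /= add0n.
have : 0 < #|V| by apply/card_gt0P; exists u.
by case: #|V|.
Qed.

Lemma dist_lt u v : dist adj u v < #|V|.
Proof. by have := has_reach u v; rewrite has_find size_iota. Qed.

Lemma dist_reach u v : reach adj (dist adj u v) u v.
Proof.
have := nth_find 0 (has_reach u v).
by rewrite nth_iota ?add0n // (dist_lt u v).
Qed.

Lemma dist_min u v k : k < dist adj u v -> ~~ reach adj k u v.
Proof.
move=> Hk; have := before_find 0 Hk.
rewrite nth_iota ?add0n; first by move=> ->.
exact: ltn_trans Hk (dist_lt u v).
Qed.

Lemma dist_leP u v k : (dist adj u v <= k) = reach adj k u v.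
Proof.
apply/idP/idP => [H|H]; first exact: reach_le H (dist_reach u v).
rewrite leqNgt; apply/negP => /dist_min; by rewrite H.
Qed.

Lemma dist0 u v : (dist adj u v == 0) = (u == v).
Proof. by rewrite -leqn0 dist_leP. Qed.

Lemma dist_uu u : dist adj u u = 0.
Proof. by apply/eqP; rewrite dist0. Qed.

Lemma dist_adj u v w : adj v w -> dist adj u w <= (dist adj u v).+1.
Proof.
move=> H; rewrite dist_leP /=; apply/orP; right; apply/existsP; exists v.
by rewrite dist_reach.
Qed.

Lemma dist_adj_l u w v : adj u w -> dist adj u v <= (dist adj w v).+1.
Proof. move=> H; rewrite dist_leP; exact: reach_cons H (dist_reach _ _). Qed.

Lemma dist_pred u v : 0 < dist adj u v ->
  exists2 w, dist adj u w = (dist adj u v).-1 & adj w v.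
Proof.
move=> H; have := dist_reach u v.
case E: (dist adj u v) H => [//|d] _ /= /orP [Hr|/existsP [w /andP [Hw Hwv]]].
  by have := @dist_min u v d; rewrite E ltnSn Hr => /(_ isT).
exists w => //; apply/eqP; rewrite eqn_leq dist_leP Hw /=.
by have := dist_adj u Hwv; rewrite E.
Qed.

Lemma dist_sym u v : dist adj u v = dist adj v u.
Proof.
suff H : forall n u v, dist adj u v <= n -> dist adj v u <= n.
  by apply/eqP; rewrite eqn_leq; apply/andP; split; apply: H.
elim=> [|n IH] {}u {}v.
  by rewrite !leqn0 !dist0 eq_sym.
case E: (dist adj u v) => [|d] Hd.
  by move/eqP: E; rewrite dist0 => /eqP ->; rewrite dist_uu.
have Hpos : 0 < dist adj u v by rewrite E.
have [w Hw Hwv] := dist_pred Hpos.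
rewrite E /= in Hw.
have Hwu : dist adj w u <= n by apply: IH; rewrite Hw.
have Hvw : adj v w by rewrite sym.
apply: leq_trans (dist_adj_l u Hvw) _; by rewrite ltnS.
Qed.

Lemma dist_adj2 u v w : adj v w -> dist adj u v <= (dist adj u w).+1.
Proof. by move=> H; apply: dist_adj; rewrite sym. Qed.

Lemma dist1 u v : (dist adj u v == 1) = adj u v.
Proof.
apply/idP/idP => [H|H].
  have := dist_reach u v; rewrite (eqP H) /=.
  case/orP=> [/eqP E|/existsP [w /andP [/eqP -> //]]].
  by move: H; rewrite E dist_uu.
rewrite eqn_leq dist_leP /= lt0n dist0.
rewrite (_ : [exists w, (u == w) && adj w v]) ?orbT //.
  by apply/negP => /eqP E; move: H; rewrite E irr.
by apply/existsP; exists u; rewrite eqxx.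
Qed.

Lemma exists_at u v j : j <= dist adj u v -> exists x, dist adj u x = j.
Proof.
move=> Hj; move Ed: (dist adj u v) Hj => d Hj.
elim: d v Ed Hj => [|d IH] v Ed Hj.
  by exists v; rewrite Ed; move: Hj; rewrite leqn0 => /eqP ->.
rewrite leq_eqVlt in Hj; case/orP: Hj => [/eqP ->|Hj]; first by exists v.
have Hpos : 0 < dist adj u v by rewrite Ed.
have [w Hw _] := dist_pred Hpos.
by apply: (IH w) => //; rewrite Hw Ed.
Qed.

Lemma dist_le_diam u v : dist adj u v <= diam adj.
Proof.
rewrite /diam. have H1 := @leq_bigmax V (fun v => dist adj u v) v.
have H2 := @leq_bigmax V (fun u => \max_v dist adj u v) u.
exact: leq_trans H1 H2.
Qed.

Section Parity.
Variable f : V -> bool.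
Hypothesis Hf : forall x y, adj x y -> f x != f y.

Lemma dist_parity u v : odd (dist adj u v) = (f u != f v).
Proof.
move Ed: (dist adj u v) => d.
elim: d v Ed => [|d IH] v Ed.
  by move/eqP: Ed; rewrite dist0 => /eqP ->; rewrite eqxx.
have Hpos : 0 < dist adj u v by rewrite Ed.
have [w Hw Hwv] := dist_pred Hpos.
rewrite Ed /= in Hw; rewrite /= (IH _ Hw).
have := Hf Hwv; by case: (f u); case: (f w); case: (f v).
Qed.

Lemma path_parity x p : path adj x p -> f (last x p) = f x (+) odd (size p).
Proof.
elim: p x => [|y p IH] x /=; first by rewrite addbF.
case/andP=> Hxy Hp; rewrite (IH _ Hp).
have := Hf Hxy; by case: (f x); case: (f y); case: (odd _).
Qed.

End Parity.
End Dist.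

Lemma double_count (T1 T2 : finType) (A : {set T1}) (B : {set T2}) (R : T1 -> T2 -> bool) :
  \sum_(a in A) #|[set b in B | R a b]| = \sum_(b in B) #|[set a in A | R a b]|.
Proof.
have E : forall (T : finType) (C : {set T}) (Q : pred T),
    #|[set b in C | Q b]| = \sum_(b in C) (Q b : nat).
  move=> T C Q; rewrite -sum1_card big_mkcond [RHS]big_mkcond /=.
  by apply: eq_bigr => i _; rewrite !inE; case: (i \in C); case: (Q i).
rewrite (eq_bigr (fun a => \sum_(b in B) (R a b : nat))); last by move=> a _; rewrite E.
rewrite [RHS](eq_bigr (fun b => \sum_(a in A) (R a b : nat))); last by move=> b _; rewrite E.
exact: exchange_big.
Qed.

Definition isl (r : nat) (z : 'I_r + 'I_r) : bool := if z is inl _ then true else false.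

Lemma Kadj_isl r a b : Kadj a b = (@isl r a != isl b).
Proof. by case: a; case: b. Qed.

Lemma card_isl r b : #|[set z : 'I_r + 'I_r | isl z == b]| = r.
Proof.
case: b.
  rewrite (_ : [set z | isl z == true] = [set inl x | x : 'I_r]).
    by rewrite card_imset ?card_ord //; move=> x y [].
  apply/setP => z; rewrite !inE; case: z => [x|x] /=.
    by rewrite (imset_f (fun x : 'I_r => inl x : 'I_r + 'I_r)).
  by apply/esym/imsetP => [[y _]].
rewrite (_ : [set z | isl z == false] = [set inr x | x : 'I_r]).
  by rewrite card_imset ?card_ord //; move=> x y [].
apply/setP => z; rewrite !inE; case: z => [x|x] /=.
  by apply/esym/imsetP => [[y _]].
by rewrite (imset_f (fun x : 'I_r => inr x : 'I_r + 'I_r)).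
Qed.

Section Main.
Variable V : finType.
Variable adj : rel V.
Variables (G N : {group {perm V}}) (m r : nat).
Hypothesis sym : symmetric adj.
Hypothesis irr : irreflexive adj.
Hypothesis conn : forall u v, connect adj u v.
Hypothesis Gaut : forall g, g \in G -> forall x y, adj (g x) (g y) = adj x y.
Hypothesis geo : geodesic_transitive adj G 3.
Hypothesis nNG : (N <| G)%g.
Hypothesis m2 : 2 <= m.
Hypothesis Horb : forall x, #|orbit 'P N x| = m.
Hypothesis r3 : 3 <= r.
Variable phi : {set V} -> 'I_r + 'I_r.
Let P := orbit 'P N @: [set: V].
Hypothesis phi_inj : {in P &, injective phi}.
Hypothesis phi_surj : forall z, exists2 B, B \in P & phi B = z.
Hypothesis phi_q : {in P &, forall B C, qadj adj B C = Kadj (phi B) (phi C)}.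
Hypothesis cov : is_cover adj P.

Local Notation orb x := (orbit 'P N x).
Local Notation dist := (dist adj).
Let d0 := dist0 conn.
Let d1 := dist1 irr conn.
Let dsym := dist_sym sym conn.
Let dleP := dist_leP conn.
Let duu := dist_uu conn.

Lemma orb_refl x : x \in orb x.
Proof. exact: orbit_refl. Qed.

Lemma orb_eq x y : y \in orb x -> orb y = orb x.
Proof. by move/orbit_eqP. Qed.

Lemma orb_P x : orb x \in P.
Proof. exact: imset_f. Qed.

Lemma memP B x : B \in P -> x \in B -> B = orb x.
Proof. by case/imsetP => y _ -> /orb_eq ->. Qed.

Lemma orbG g x y : g \in G -> y \in orb x -> g y \in orb (g x).
Proof.
move=> gG /orbitP [n nN <-] /=.
apply/orbitP; exists (n ^ g)%g.
  by rewrite memJ_norm // (subsetP (normal_norm nNG)).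
by rewrite /= /conjg /aperm !permM permK.
Qed.

Definition sd x := isl (phi (orb x)).

Lemma ex_edge : exists x y, adj x y /\ orb x != orb y.
Proof.
have r0 : 0 < r by apply: leq_trans r3.
have [B HB EB] := phi_surj (inl (Ordinal r0)).
have [C HC EC] := phi_surj (inr (Ordinal r0)).
have := phi_q HB HC; rewrite EB EC /= /qadj => /andP [BC /existsP [x /andP [xB /existsP [y /andP [yC xy]]]]].
exists x, y; split => //.
by rewrite -(memP HB xB) -(memP HC yC).
Qed.

Lemma dist_adj1 x y : adj x y -> dist x y = 1.
Proof. by move=> H; apply/eqP; rewrite d1. Qed.

Lemma no_in_edge x y : adj x y -> orb x != orb y.
Proof.
move=> Hxy; have [x0 [y0 [H0 D0]]] := ex_edge.
have g1 : is_geodesic adj 1 [:: x; y] by rewrite /= Hxy dist_adj1.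
have g2 : is_geodesic adj 1 [:: x0; y0] by rewrite /= H0 dist_adj1.
have [g gG /= [E1 E2]] := geo.2 1 isT _ _ g1 g2.
apply/negP => /eqP E; move: D0; apply/negP; rewrite negbK.
have : y \in orb x by rewrite E orb_refl.
by move/(orbG gG); rewrite E1 E2 => /orb_eq ->.
Qed.

Lemma qadj_orb x y : adj x y -> qadj adj (orb x) (orb y).
Proof.
move=> H; rewrite /qadj no_in_edge //=.
apply/existsP; exists x; rewrite orb_refl /=.
by apply/existsP; exists y; rewrite orb_refl.
Qed.

Lemma sd_adj x y : adj x y -> sd x != sd y.
Proof.
move=> H; have := qadj_orb H; rewrite phi_q ?orb_P //.
by rewrite Kadj_isl.
Qed.

Lemma cover1 x B : B \in P -> isl (phi B) != sd x ->
  #|[set y in B | adj x y]| = 1.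
Proof.
move=> HB Hs; apply: (cov (orb_P x) HB (orb_refl x)).
by rewrite (phi_q (orb_P x) HB) Kadj_isl eq_sym.
Qed.

Lemma nb_ex x B : B \in P -> isl (phi B) != sd x -> exists y, y \in B /\ adj x y.
Proof.
move=> HB Hs; have /eqP/cards1P [y Ey] := cover1 HB Hs.
have : y \in [set y in B | adj x y] by rewrite Ey inE.
by rewrite inE => /andP [H1 H2]; exists y.
Qed.

Lemma nb_uniq x B y1 y2 : B \in P -> isl (phi B) != sd x ->
  y1 \in B -> y2 \in B -> adj x y1 -> adj x y2 -> y1 = y2.
Proof.
move=> HB Hs H1 H2 A1 A2; have /eqP/cards1P [y Ey] := cover1 HB Hs.
have : y1 \in [set y in B | adj x y] by rewrite inE H1 A1.
have : y2 \in [set y in B | adj x y] by rewrite inE H2 A2.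
by rewrite Ey !inE => /eqP -> /eqP ->.
Qed.

Lemma dist_par u v : odd (dist u v) = (sd u != sd v).
Proof. exact: (dist_parity conn sd_adj). Qed.

Lemma same_orb_far x y : y \in orb x -> x != y -> 4 <= dist x y.
Proof.
move=> Hy Hxy; have Es : sd y = sd x by rewrite /sd (orb_eq Hy).
have Hp := dist_par x y; rewrite Es eqxx in Hp.
case E: (dist x y) Hp => [|[|[|[|d]]]] //= _.
  by move/eqP: E; rewrite d0 (negbTE Hxy).
have Hpos : 0 < dist x y by rewrite E.
have [w Hw Hwy] := dist_pred conn Hpos; rewrite E /= in Hw.
have Hxw : adj x w by rewrite -d1 Hw.
have Hs : isl (phi (orb x)) != sd w by have := sd_adj Hxw.
have Hwx : adj w x by rewrite sym.
have E' := nb_uniq (orb_P x) Hs (orb_refl x) Hy Hwx Hwy.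
by rewrite E' eqxx in Hxy.
Qed.

Lemma orb_other x : exists2 y, y \in orb x & x != y.
Proof.
have : 1 < #|orb x| by rewrite Horb.
case/card_gt1P => a [b [Ha Hb Hab]].
case: (eqVneq x a) => [Exa|Nxa]; last by exists a.
by exists b => //; rewrite Exa.
Qed.

Lemma some_vertex : exists u : V, true.
Proof.
have r0 : 0 < r by apply: leq_trans r3.
have [B HB _] := phi_surj (inl (Ordinal r0)).
by case/imsetP: HB => x _ _; exists x.
Qed.

Lemma diam_ge4 : 4 <= diam adj.
Proof.
have [u _] := some_vertex; have [v Hv Nuv] := orb_other u.
exact: leq_trans (same_orb_far Hv Nuv) (dist_le_diam _ _ _).
Qed.

Lemma bip : bipartite adj.
Proof. by exists sd; exact: sd_adj. Qed.

Lemma cycle_even c : path.cycle adj c -> ~~ odd (size c).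
Proof.
case: c => [//|x p] /=; rewrite -cats1 => Hp.
rewrite cats1 in Hp; have := path_parity sd_adj Hp.
rewrite last_rcons size_rcons /=.
by case: (sd x); case: (odd _).
Qed.

Lemma girth4 : girth_eq adj 4 \/ girth_eq adj 5 -> girth_eq adj 4.
Proof.
case=> // [[[c [/and3P [_ _ Hc] Hs] _]]].
by have := cycle_even Hc; rewrite Hs.
Qed.


Lemma card_side b : #|[set B in P | isl (phi B) == b]| = r.
Proof.
transitivity #|[set z : 'I_r + 'I_r | isl z == b]|; last exact: card_isl.
rewrite -(card_in_imset (f := phi)); last first.
  by move=> B C; rewrite !inE => /andP [HB _] /andP [HC _]; exact: phi_inj.
apply: eq_card => z; rewrite [in RHS]inE; apply/imsetP/idP => [[B HB ->]|Hz].
  by move: HB; rewrite inE => /andP [].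
have [B HB EB] := phi_surj z; exists B => //; by rewrite inE HB EB.
Qed.

Lemma neq_negb (a b : bool) : (a == ~~ b) = (a != b).
Proof. by case: a; case: b. Qed.

Lemma sd_orb B x : B \in P -> x \in B -> sd x = isl (phi B).
Proof. by move=> HB Hx; rewrite /sd -(memP HB Hx). Qed.

Lemma valency u : #|[set w | adj u w]| = r.
Proof.
have := double_count [set w | adj u w] [set B in P | isl (phi B) == ~~ sd u]
  (fun w B => w \in B).
rewrite (eq_bigr (fun _ => 1)); last first.
  move=> w; rewrite inE => Huw; apply/eqP/cards1P; exists (orb w).
  apply/setP => B; rewrite !inE; apply/andP/eqP => [[/andP [HB _] Hw]|->].
    exact: memP.
  by rewrite orb_P orb_refl neq_negb eq_sym sd_adj.
rewrite sum1_card => ->.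
rewrite (eq_bigr (fun _ => 1)); last first.
  move=> B; rewrite inE => /andP [HB Hs]; rewrite -(cover1 (x := u) HB).
    by apply: eq_card => y; rewrite !inE andbC.
  by rewrite -neq_negb.
by rewrite sum1_card card_side.
Qed.


Definition cn a b := #|[set w | adj a w && adj w b]|.

Lemma cn_inv g a b : g \in G -> cn (g a) (g b) = cn a b.
Proof.
move=> gG.
rewrite /cn (_ : [set w | adj (g a) w && adj w (g b)] = g @: [set w | adj a w && adj w b]).
  by rewrite card_imset //; exact: perm_inj.
apply/setP => w; rewrite inE; apply/idP/imsetP => [H|[x Hx ->]].
  exists (g^-1 w)%g; last by rewrite permKV.
  by rewrite inE -(Gaut gG a) -(Gaut gG _ b) permKV.
by move: Hx; rewrite inE !Gaut.
Qed.

Lemma dist_eq2 a b : a != b -> sd a = sd b -> dist a b <= 2 -> dist a b = 2.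
Proof.
move=> Nab Es Hle; have Hp := dist_par a b; rewrite Es eqxx in Hp.
move: Hle Hp; case E: (dist a b) => [|[|[|d]]] //= _ _.
by move/eqP: E; rewrite d0 (negbTE Nab).
Qed.

Section DT.
Hypothesis DT : dist_transitive adj G 4.
Hypothesis Hg4 : girth_eq adj 4.

Lemma dt_pair u v x y : dist u v <= 4 -> dist u v = dist x y ->
  exists2 g, g \in G & g u = x /\ g v = y.
Proof. by move=> H E; apply: (DT H) => //. Qed.

Lemma c_const : exists c, 2 <= c /\ forall x y, dist x y = 2 -> cn x y = c.
Proof.
have [[cy [Hcy Hs]] _] := Hg4.
case: cy Hcy Hs => [|a [|b [|c' [|d [|? ?]]]]] //= /and3P [_ Hu Hc] _.
move: Hc; rewrite /= => /and5P [Hab Hbc Hcd Hda _].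
move: Hu; rewrite /= !inE !negb_or => /andP [/and3P [Nab Nac Nad] /andP [/andP [Nbc Nbd] _]].
have Dac : dist a c' = 2.
  apply: dist_eq2 => //.
    have := sd_adj Hab; have := sd_adj Hbc.
    by case: (sd a); case: (sd b); case: (sd c').
  apply: leq_trans (dist_adj conn a Hbc) _.
  by have := dist_adj conn a Hab; rewrite duu.
exists (cn a c'); split.
  rewrite /cn; have <- : #|[set b; d]| = 2 by rewrite cards2 Nbd.
  apply: subset_leq_card; apply/subsetP => w; rewrite !inE => /orP [] /eqP ->.
    by rewrite Hab Hbc.
  by rewrite (sym a d) Hda (sym d c') Hcd.
move=> x y Dxy.
have L1 : dist a c' <= 4 by rewrite Dac.
have L2 : dist a c' = dist x y by rewrite Dac Dxy.
have [g gG [<- <-]] := dt_pair L1 L2.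
exact: cn_inv.
Qed.

Lemma far4 u x : dist u x = 4 -> x \in orb u.
Proof.
move=> Hx.
have [v Hv Nuv] := orb_other u.
have [y Hy] := exists_at conn (j := 3) (leq_trans (isT : 3 <= 4) (same_orb_far Hv Nuv)).
have Hs : isl (phi (orb u)) != sd y.
  by have := dist_par u y; rewrite Hy.
have [z [Hz Hyz]] := nb_ex (orb_P u) Hs.
have Nuz : u != z.
  apply/negP => /eqP Euz; move: Hyz; rewrite -Euz sym -d1 Hy.
  by [].
have Dz : dist u z = 4.
  apply/eqP; rewrite eqn_leq same_orb_far // andbT.
  by have := dist_adj conn u Hyz; rewrite Hy.
have L1 : dist u z <= 4 by rewrite Dz.
have L2 : dist u z = dist u x by rewrite Dz Hx.
have [g gG [Eu Ez]] := dt_pair L1 L2.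
by rewrite -Ez -Eu; apply: orbG.
Qed.

Lemma dist_le4 u w : dist u w <= 4.
Proof.
rewrite leqNgt; apply/negP => H5.
have [w' Hw'] := exists_at conn (j := 5) H5.
have P5 : 0 < dist u w' by rewrite Hw'.
have [x4 Hx4 Hx4w] := dist_pred conn P5; rewrite Hw' /= in Hx4.
have P4 : 0 < dist u x4 by rewrite Hx4.
have [v Hv Hvx] := dist_pred conn P4; rewrite Hx4 /= in Hv.
have Dvw : dist v w' = 2.
  apply: dist_eq2.
  - by apply/negP => /eqP E; move: Hv; rewrite E Hw'.
  - have := dist_par u v; have := dist_par u w'; rewrite Hv Hw' /=.
    by case: (sd u); case: (sd v); case: (sd w').
  - apply: leq_trans (dist_adj conn v Hx4w) _.
    by have := dist_adj conn v Hvx; rewrite duu.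
have [c [c2 Hc]] := c_const.
have := Hc _ _ Dvw; rewrite /cn => Hcard.
have : #|[set t | adj v t && adj t w']| <= 1.
  apply/card_le1_eqP => t1 t2; rewrite !inE => /andP [A1 B1] /andP [A2 B2].
  have F t : adj v t -> adj t w' -> t \in orb u /\ adj v t.
    move=> At Bt; split => //; apply: far4; apply/eqP; rewrite eqn_leq.
    have := dist_adj conn u At; rewrite Hv => -> /=.
    by have := dist_adj conn u Bt; rewrite Hw'.
  have Hs : isl (phi (orb u)) != sd v.
    by have := dist_par u v; rewrite Hv.
  have [T1 _] := F _ A1 B1; have [T2 _] := F _ A2 B2.
  by rewrite (nb_uniq (orb_P u) Hs T1 T2 A1 A2).
by rewrite Hcard leqNgt c2.
Qed.

Lemma diam4 : diam adj = 4.
Proof.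
apply/eqP; rewrite eqn_leq diam_ge4 andbT.
apply/bigmax_leqP => u _; apply/bigmax_leqP => v _; exact: dist_le4.
Qed.

Lemma dist4_iff u x : (dist u x == 4) = (x \in orb u) && (u != x).
Proof.
apply/idP/andP => [/eqP H|[H1 H2]].
  split; first exact: far4.
  by apply/negP => /eqP E; move: H; rewrite E duu.
by rewrite eqn_leq dist_le4 same_orb_far.
Qed.

Lemma dist2_same u x : sd x = sd u -> orb x != orb u -> dist u x = 2.
Proof.
move=> Es No; have Hp := dist_par u x; rewrite Es eqxx in Hp.
have Nux : u != x by apply/negP => /eqP E; move: No; rewrite E eqxx.
have := dist_le4 u x; have := dist4_iff u x.
move: Hp; case E: (dist u x) => [|[|[|[|[|d]]]]] //= _.
  by move/eqP: E; rewrite d0 (negbTE Nux).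
by move/esym/andP => [/orb_eq H _]; move: No; rewrite H eqxx.
Qed.


Section CC.
Variable c : nat.
Hypothesis c2 : 2 <= c.
Hypothesis Hc : forall x y, dist x y = 2 -> cn x y = c.

Lemma r_eq : r = m * c.
Proof.
have [u _] := some_vertex.
have : 1 < #|[set z : 'I_r + 'I_r | isl z == sd u]| by rewrite card_isl (leq_trans _ r3).
case/card_gt1P => z1 [z2 [H1 H2 N12]].
have [z [Hz Nz]] : exists z, isl z == sd u /\ z != phi (orb u).
  case: (eqVneq z1 (phi (orb u))) => E1; last by exists z1; move: H1; rewrite inE.
  exists z2; move: H2; rewrite inE => ->; split => //.
  by rewrite -E1 eq_sym.
have [D HD ED] := phi_surj z.
have := double_count [set w | adj u w] D adj.
rewrite (eq_bigr (fun _ => 1)); last first.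
  move=> w; rewrite inE => Huw; apply: cover1 => //.
  rewrite ED (eqP Hz); exact: sd_adj.
rewrite sum1_card valency => ->.
rewrite (eq_bigr (fun _ => c)); last first.
  move=> x Hx; rewrite -(Hc (x := u) (y := x)).
    by apply: eq_card => w; rewrite !inE.
  apply: dist2_same.
    by rewrite (sd_orb HD Hx) ED (eqP Hz).
  by rewrite -(memP HD Hx); apply/negP => /eqP E; move: Nz; rewrite -ED E eqxx.
rewrite sum_nat_const.
by case/imsetP: HD => y _ ->; rewrite Horb.
Qed.

Lemma nb_dist u v w : adj v w ->
  dist u w = (dist u v).+1 \/ (0 < dist u v /\ dist u w = (dist u v).-1).
Proof.
move=> Hvw.
have L1 := dist_adj conn u Hvw.
have Hwv : adj w v by rewrite sym.
have L2 := dist_adj conn u Hwv.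
have Hp : odd (dist u w) = ~~ odd (dist u v).
  rewrite !dist_par; have := sd_adj Hvw.
  by case: (sd u); case: (sd v); case: (sd w).
move: L1 L2 Hp; move: (dist u w) (dist u v) => a b L1 L2 Hp.
have [E|[E|E]] : a = b.-1 /\ 0 < b \/ a = b \/ a = b.+1 by lia.
- by right; case: E.
- by move: Hp; rewrite E; case: (odd b).
- by left.
Qed.

Lemma nbrs_split u v : 0 < dist u v ->
  nbrs_at adj u v (dist u v).-1 + nbrs_at adj u v (dist u v).+1 = r.
Proof.
move=> Hpos.
rewrite -(valency v) -(cardsID [set w | dist u w == (dist u v).-1]).
congr (_ + _); apply: eq_card => w; rewrite !inE.
  by rewrite andbC.
rewrite andbC; case Hvw: (adj v w); rewrite ?andbF //=.
have := nb_dist u Hvw; move: (dist u w) (dist u v) Hpos => a b Hb.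
case=> [->|[_ ->]]; rewrite eqxx //=.
  by case: b Hb => // b _ /=; rewrite andbT; apply/esym/eqP; lia.
by case: b Hb => // b _ /=; rewrite andbT; apply/eqP; lia.
Qed.


Lemma int_array : has_intersection_array adj [:: r; r - 1; r - c; 1] [:: 1; c; r - 1; r].
Proof.
rewrite /has_intersection_array diam4; split => // u v.
have Hs := @nbrs_split u v.
have Hle := dist_le4 u v.
case E: (dist u v) Hs Hle => [|[|[|[|[|d]]]]] Hs Hle //=.
- split => // _; move/eqP: E; rewrite d0 => /eqP <-.
  rewrite /nbrs_at -(valency u); apply: eq_card => w; rewrite !inE d1.
  by rewrite andbb.
- have H0 : nbrs_at adj u v 0 = 1.
    rewrite /nbrs_at -(cards1 u); apply: eq_card => w; rewrite !inE d0 eq_sym.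
    case: eqP => [->|]; last by rewrite andbF.
    by rewrite andbT sym -d1 E.
  by split => _; [rewrite -(Hs isT) H0 addKn | exact: H0].
- have H1 : nbrs_at adj u v 1 = c.
    rewrite -(Hc E) /nbrs_at /cn; apply: eq_card => w; rewrite !inE d1.
    by rewrite andbC (sym w v).
  by split => _; [rewrite -(Hs isT) H1 addKn | exact: H1].
- have H4 : nbrs_at adj u v 4 = 1.
    have Hs' : isl (phi (orb u)) != sd v by have := dist_par u v; rewrite E.
    transitivity #|[set y in orb u | adj v y]|; last exact: cover1 (orb_P u) Hs'.
    rewrite /nbrs_at; apply: eq_card => w; rewrite !inE.
    rewrite dist4_iff; case Hvw: (adj v w); rewrite ?andbF ?andbT //=.
    case: eqVneq => [Euw|]; rewrite ?andbT //.
    by move: Hvw; rewrite -Euw sym -d1 E.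
  by split => _; [exact: H4 | rewrite -(Hs isT) H4 addnK].
- have H5 : nbrs_at adj u v 5 = 0.
    apply/eqP; rewrite cards_eq0 -subset0; apply/subsetP => w; rewrite !inE.
    by case/andP => _ /eqP E5; have := dist_le4 u w; rewrite E5.
  by split => // _; rewrite -(Hs isT) H5 addn0.
Qed.

Lemma antipE x y : antip adj x y = (y \in orb x).
Proof.
rewrite /antip diam4 d0 dist4_iff; case: eqVneq => [->|_]; first by rewrite orb_refl.
by rewrite andbT.
Qed.

Lemma classesE : antipodal_classes adj = P.
Proof.
apply/setP => B; apply/imsetP/imsetP => [[x _ ->]|[x _ ->]]; exists x => //;
  by apply/setP => y; rewrite inE antipE.
Qed.

Lemma cover_Krr : antipodal_cover_Krr adj m r.
Proof.
split.
- split => [x|x y|x y z]; rewrite ?antipE ?orb_refl //.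
    by rewrite orbit_sym.
  by move=> H1; rewrite (orb_eq H1).
- by move=> B; rewrite classesE => /imsetP [x _ ->]; rewrite Horb.
- by rewrite classesE; exists phi.
- by rewrite classesE.
Qed.

Lemma partition_side b : partition [set B in P | isl (phi B) == b] [set x | sd x == b].
Proof.
apply/and3P; split.
- apply/eqP/setP => x; rewrite inE; apply/bigcupP/idP => [[B HB Hx]|Hx].
    by move: HB; rewrite inE => /andP [HB Hb]; rewrite (sd_orb HB Hx).
  by exists (orb x); rewrite ?orb_refl // inE orb_P.
- apply/trivIsetP => A B; rewrite !inE => /andP [HA _] /andP [HB _] NAB.
  rewrite -setI_eq0; apply/eqP/setP => x; rewrite !inE; apply/negP => /andP [xA xB].
  by move: NAB; rewrite (memP HA xA) (memP HB xB) eqxx.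
- apply/negP; rewrite inE => /andP [/imsetP [x _ E] _].
  by have := orb_refl x; rewrite -E inE.
Qed.

Lemma card_X b : #|[set x | sd x == b]| = r * m.
Proof.
have := double_count [set x | sd x == b] [set B in P | isl (phi B) == b] (fun x B => x \in B).
rewrite (eq_bigr (fun _ => 1)); last first.
  move=> x; rewrite inE => Hx; apply/eqP/cards1P; exists (orb x).
  apply/setP => B; rewrite !inE; apply/andP/eqP => [[/andP [HB _] H]|->].
    exact: memP.
  by rewrite orb_P orb_refl.
rewrite sum1_card => ->.
rewrite (eq_bigr (fun _ => m)); last first.
  move=> B; rewrite inE => /andP [HB Hb].
  case/imsetP: (HB) => y _ EB; rewrite -(Horb y) -EB.
  apply: eq_card => x; rewrite !inE; case Hx: (x \in B); rewrite ?andbF //.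
  by rewrite andbT (sd_orb HB Hx) Hb.
by rewrite sum_nat_const card_side.
Qed.

Lemma rgd : RGD_incidence adj r c m sd [set B in P | isl (phi B) == true]
  [set B in P | isl (phi B) == false].
Proof.
have XE : [set x | sd x] = [set x | sd x == true].
  by apply/setP => x; rewrite !inE eqb_id.
have BlE : [set x | ~~ sd x] = [set x | sd x == false].
  by apply/setP => x; rewrite !inE eqbF_neg.
have [_ Tr _] := and3P (partition_side true).
rewrite /RGD_incidence /= XE BlE.
split.
- exact: sd_adj.
- split; first exact: card_X. split; first exact: partition_side.
  by move=> C; rewrite inE => /andP [/imsetP [x _ ->] _]; rewrite Horb.
- move=> b; rewrite inE => /eqP Hb; split.
    rewrite -(valency b); apply: eq_card => x; rewrite !inE.
    case Hbx: (adj b x); rewrite ?andbF ?andbT //.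
    by move: (sd_adj Hbx); rewrite Hb; case: (sd x).
  move=> C; rewrite inE => /andP [HC /eqP HCs].
  rewrite -(cover1 (x := b) HC); last by rewrite HCs Hb.
  apply: eq_card => x; rewrite !inE; case Hx: (x \in C); rewrite ?andbF //=.
  by rewrite andbT (sd_orb HC Hx) HCs.
- move=> x y; rewrite !inE => /eqP Hx /eqP Hy Npb.
  have Hxp : forall z, sd z = true -> pblock [set B in P | isl (phi B) == true] z = orb z.
    move=> z Hz; apply: (def_pblock Tr _ (orb_refl z)).
    by rewrite inE orb_P /=; apply/eqP.
  rewrite (Hxp _ Hx) (Hxp _ Hy) in Npb.
  rewrite -(Hc (x := x) (y := y)); last first.
    by apply: dist2_same; rewrite ?Hx ?Hy // eq_sym.
  apply: eq_card => w; rewrite !inE.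
  case Hxw: (adj x w); rewrite ?andbF ?andbT /=.
    rewrite sym Hxw /= (sym w y); move: (sd_adj Hxw); rewrite Hx.
    by case: (sd w).
  by rewrite sym Hxw !andbF.
- split; first exact: partition_side.
  move=> Q; rewrite inE => /andP [HQ /eqP HQs] x; rewrite inE => /eqP Hx.
  rewrite -(cover1 (x := x) HQ); last by rewrite HQs Hx.
  by apply: eq_card => b; rewrite !inE sym.
Qed.

Lemma blocks_c Q1 Q2 b1 b2 :
  Q1 \in [set B in P | isl (phi B) == false] -> Q2 \in [set B in P | isl (phi B) == false] ->
  Q1 != Q2 -> b1 \in Q1 -> b2 \in Q2 ->
  #|blk adj sd b1 :&: blk adj sd b2| = c.
Proof.
rewrite !inE => /andP [H1 /eqP s1] /andP [H2 /eqP s2] N12 b1Q b2Q.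
rewrite -(Hc (x := b1) (y := b2)); last first.
  apply: dist2_same; first by rewrite (sd_orb H1 b1Q) (sd_orb H2 b2Q) s1 s2.
  by rewrite -(memP H1 b1Q) -(memP H2 b2Q) eq_sym.
apply: eq_card => w; rewrite !inE.
case A1: (adj b1 w); rewrite ?andbF ?andbT //=.
move: (sd_adj A1); rewrite (sd_orb H1 b1Q) s1 (sym w b2).
by case: (sd w).
Qed.


Lemma dt_case : [\/ m = 2 /\ hadamard_valency adj r,
        exists c2,
          [/\ dist_transitive adj G (diam adj),
              antipodal_cover_Krr adj m r,
              (exists side Pcl Par,
                  RGD_incidence adj r c2 m side Pcl Par /\
                  (forall Q1 Q2 b1 b2, Q1 \in Par -> Q2 \in Par -> Q1 != Q2 ->
                     b1 \in Q1 -> b2 \in Q2 ->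
                     #|blk adj side b1 :&: blk adj side b2| = c2)),
              r = m * c2 /\
              has_intersection_array adj [:: r; r - 1; r - c2; 1] [:: 1; c2; r - 1; r] &
              2 <= c2 /\ 3 <= m]
      | ~ dist_transitive adj G 4].
Proof.
case: (eqVneq m 2) => [Em|Nm].
  apply: Or31; split => //; exists c.
  have Hr2 : r = 2 * c by rewrite r_eq Em.
  split => //; rewrite -Hr2.
  have E : r - c = c by rewrite Hr2 mul2n -addnn addnK.
  rewrite -{1}E; exact: int_array.
apply: Or32; exists c; split.
- by rewrite diam4.
- exact: cover_Krr.
- exists sd, [set B in P | isl (phi B) == true], [set B in P | isl (phi B) == false].
  split; [exact: rgd | exact: blocks_c].
- split; [exact: r_eq | exact: int_array].
- by split => //; rewrite ltn_neqAle eq_sym Nm.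
Qed.
End CC.
End DT.


Hypothesis Hgir : girth_eq adj 4 \/ girth_eq adj 5.

Lemma main_result :
  [/\ bipartite adj, girth_eq adj 4, 4 <= diam adj &
    [\/ m = 2 /\ hadamard_valency adj r,
        exists c2,
          [/\ dist_transitive adj G (diam adj),
              antipodal_cover_Krr adj m r,
              (exists side Pcl Par,
                  RGD_incidence adj r c2 m side Pcl Par /\
                  (forall Q1 Q2 b1 b2, Q1 \in Par -> Q2 \in Par -> Q1 != Q2 ->
                     b1 \in Q1 -> b2 \in Q2 ->
                     #|blk adj side b1 :&: blk adj side b2| = c2)),
              r = m * c2 /\
              has_intersection_array adj [:: r; r - 1; r - c2; 1] [:: 1; c2; r - 1; r] &
              2 <= c2 /\ 3 <= m]
      | ~ dist_transitive adj G 4]].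
Proof.
have G4 := girth4 Hgir.
split; [exact: bip | exact: G4 | exact: diam_ge4 | ].
case: (classic (dist_transitive adj G 4)) => [DT|nDT]; last by apply: Or33.
have [c [c2 Hc]] := c_const DT G4.
exact: (dt_case DT G4 c2 Hc).
Qed.

End Main.

Theorem lemma5p10 (V : finType) (adj : rel V) (G N : {group {perm V}}) (m r : nat) :
  symmetric adj -> irreflexive adj -> (forall u v, connect adj u v) ->
  (forall g, g \in G -> forall x y, adj (g x) (g y) = adj x y) ->
  geodesic_transitive adj G 3 ->
  (girth_eq adj 4 \/ girth_eq adj 5) ->
  (N <| G)%g -> 2 <= m -> (forall x, #|orbit 'P N x| = m) ->
  3 <= r ->
  quotient_is_Krr adj (orbit 'P N @: [set: V]) r ->
  is_cover adj (orbit 'P N @: [set: V]) ->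
  [/\ bipartite adj, girth_eq adj 4, 4 <= diam adj &
    [\/ m = 2 /\ hadamard_valency adj r,
        exists c2,
          [/\ dist_transitive adj G (diam adj),
              antipodal_cover_Krr adj m r,
              (exists side Pcl Par,
                  RGD_incidence adj r c2 m side Pcl Par /\
                  (forall Q1 Q2 b1 b2, Q1 \in Par -> Q2 \in Par -> Q1 != Q2 ->
                     b1 \in Q1 -> b2 \in Q2 ->
                     #|blk adj side b1 :&: blk adj side b2| = c2)),
              r = m * c2 /\
              has_intersection_array adj [:: r; r - 1; r - c2; 1] [:: 1; c2; r - 1; r] &
              2 <= c2 /\ 3 <= m]
      | ~ dist_transitive adj G 4]].

Proof.
move=> sym irr conn Gaut geo Hgir nNG m2 Horb r3 [phi [pinj psurj pq]] cov.
exact: (main_result sym irr conn Gaut geo nNG m2 Horb r3 pinj psurj pq cov Hgir).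
Qed.
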